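(* A function $f : X \to \mathbb{R}$ is of Baire class 1 if and only if both $f$ and $-f$ are limsup functions.
   Context: Let $A$ be a non-empty countable set and $T$ a pruned tree on $A$ (a set of finite sequences of elements of $A$, closed under initial segments, in which every sequence has a proper extension in $T$). Let $X$ be the set of infinite branches of $T$, with the topology generated by the cylinder sets $O(s) = \{x \in X : s \text{ is an initial segment of } x\}$, $s \in T$. A function $f : X \to \mathbb{R}$ is a limsup function if there exists $u : T \to \mathbb{R}$ with $f(x) = \limsup_{t\to\infty} u(x_0,\dots,x_t)$ for every $x \in X$. Baire class 1 means a pointwise limit of a sequence of continuous functions $X \to \mathbb{R}$. *)

(* Defs.v *)
From Stdlib Require Import Reals List.
From Coquelicot Require Import Coquelicot.
Import ListNotations.
Open Scope R_scope.

Section Trees.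
Variable A : Type.

Definition pre (x : nat -> A) (n : nat) : list A := map x (seq 0 n).

Definition is_tree (T : list A -> Prop) : Prop :=
  forall s t : list A, T (s ++ t) -> T s.

Definition is_pruned (T : list A -> Prop) : Prop :=
  forall s : list A, T s -> exists t : list A, t <> [] /\ T (s ++ t).

Definition countable : Prop := exists g : A -> nat, forall a b, g a = g b -> a = b.

Variable Tr : list A -> Prop.

Definition is_branch (x : nat -> A) : Prop := forall n, Tr (pre x n).
Definition branches : Type := { x : nat -> A | is_branch x }.

Definition initial_segment (s : list A) (x : branches) : Prop :=
  s = pre (proj1_sig x) (length s).

Definition cyl (s : list A) (x : branches) : Prop := initial_segment s x.

(* open sets of the topology generated by the cylinders O(s), s in T:
   unions of finite intersections of cylinders *)
Definition branch_open (U : branches -> Prop) : Prop :=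
  forall x, U x ->
    exists ss : list (list A),
      List.Forall Tr ss /\ List.Forall (fun s => cyl s x) ss /\
      forall y, List.Forall (fun s => cyl s y) ss -> U y.

Definition branch_continuous (g : branches -> R) : Prop :=
  forall V : R -> Prop, open_set V -> branch_open (fun x => V (g x)).

Definition baire_class1 (f : branches -> R) : Prop :=
  exists g : nat -> branches -> R,
    (forall n, branch_continuous (g n)) /\
    forall x, is_lim_seq (fun n => g n x) (f x).

(* limsup function: f(x) = limsup_t u(x_0,...,x_t) for some u on T
   (u is given on all finite sequences; only its values on T matter) *)
Definition limsup_function (f : branches -> R) : Prop :=
  exists u : list A -> R,
    forall x : branches,
      LimSup_seq (fun t => u (pre (proj1_sig x) (S t))) = Finite (f x).

End Trees.

(* Main.v *)
Require Import Defs.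
From Stdlib Require Import Reals List ClassicalEpsilon Lia Lra.
From Coquelicot Require Import Coquelicot.
Open Scope R_scope.

Lemma pre_length (A : Type) (x : nat -> A) n : length (Defs.pre A x n) = n.
Proof. unfold Defs.pre. rewrite length_map, length_seq. reflexivity. Qed.

Lemma pre_eq_iff (A : Type) (x y : nat -> A) n :
  Defs.pre A x n = Defs.pre A y n <-> (forall i, (i < n)%nat -> x i = y i).
Proof.
  unfold Defs.pre; split.
  - intros H i Hi.
    assert (E := f_equal (fun l => nth i l (x 0%nat)) H). simpl in E.
    rewrite (nth_indep (map y (seq 0 n)) (x 0%nat) (y 0%nat)) in E
      by (rewrite length_map, length_seq; lia).
    rewrite !map_nth, !seq_nth in E by lia. simpl in E. exact E.
  - intros H. apply map_ext_in. intros a Ha. apply in_seq in Ha. apply H. lia.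
Qed.

Lemma cyl_pre_iff (A : Type) Tr (x : nat -> A) n (y : branches A Tr) :
  cyl A Tr (Defs.pre A x n) y <-> (forall i, (i < n)%nat -> x i = proj1_sig y i).
Proof.
  unfold cyl, initial_segment. rewrite pre_length. apply pre_eq_iff.
Qed.

Lemma cyl_self (A : Type) Tr (x : branches A Tr) n : cyl A Tr (Defs.pre A (proj1_sig x) n) x.
Proof. apply cyl_pre_iff. auto. Qed.

Fixpoint Umax (a : nat -> R) (k d : nat) : R :=
  match d with O => a k | S d' => Rmax (Umax a k d') (a (k + S d')%nat) end.
Fixpoint Vmin (a : nat -> R) (k d : nat) : R :=
  match d with O => a k | S d' => Rmin (Vmin a k d') (a (k + S d')%nat) end.

Lemma Umax_ge a k d i : (i <= d)%nat -> a (k + i)%nat <= Umax a k d.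
Proof.
  induction d; intros Hi; simpl.
  - replace i with 0%nat by lia. rewrite Nat.add_0_r. lra.
  - destruct (Nat.eq_dec i (S d)) as [->|Hne].
    + apply Rmax_r.
    + eapply Rle_trans; [apply IHd; lia| apply Rmax_l].
Qed.
Lemma Umax_le a k d B : (forall t, (k <= t)%nat -> a t <= B) -> Umax a k d <= B.
Proof.
  intros H; induction d; simpl.
  - apply H; lia.
  - apply Rmax_lub; auto. apply H; lia.
Qed.
Lemma Vmin_le a k d i : (i <= d)%nat -> Vmin a k d <= a (k + i)%nat.
Proof.
  induction d; intros Hi; simpl.
  - replace i with 0%nat by lia. rewrite Nat.add_0_r. lra.
  - destruct (Nat.eq_dec i (S d)) as [->|Hne].
    + apply Rmin_r.
    + eapply Rle_trans; [apply Rmin_l | apply IHd; lia].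
Qed.
Lemma Vmin_ge a k d B : (forall t, (k <= t)%nat -> B <= a t) -> B <= Vmin a k d.
Proof.
  intros H; induction d; simpl.
  - apply H; lia.
  - apply Rmin_glb; auto. apply H; lia.
Qed.
Lemma Umax_ext a a' k d : (forall t, (t <= k + d)%nat -> a t = a' t) -> Umax a k d = Umax a' k d.
Proof. intros H; induction d; simpl. - apply H; lia. - rewrite IHd by (intros; apply H; lia). rewrite (H (k + S d)%nat) by lia. auto. Qed.
Lemma Vmin_ext a a' k d : (forall t, (t <= k + d)%nat -> a t = a' t) -> Vmin a k d = Vmin a' k d.
Proof. intros H; induction d; simpl. - apply H; lia. - rewrite IHd by (intros; apply H; lia). rewrite (H (k + S d)%nat) by lia. auto. Qed.

Definition condb (a b : nat -> R) (n k : nat) : bool :=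
  if Rle_dec (Vmin b k (n - k)) (Umax a k (n - k) + / (INR k + 1)) then true else false.

Fixpoint search (a b : nat -> R) (n m : nat) : nat :=
  match m with O => O | S m' => if condb a b n (S m') then S m' else search a b n m' end.

Lemma search_le a b n m : (search a b n m <= m)%nat.
Proof. induction m; simpl; auto. destruct (condb a b n (S m)); [lia|]. apply le_S; exact IHm. Qed.
Lemma search_ge a b n m j : (j <= m)%nat -> condb a b n j = true -> (j <= search a b n m)%nat.
Proof.
  induction m; intros Hj Hc; simpl. - lia.
  - destruct (Nat.eq_dec j (S m)) as [->|Hne]. + rewrite Hc; lia.
    + destruct (condb a b n (S m)); [lia| apply IHm; auto; lia].
Qed.
Lemma search_cond a b n m : search a b n m = O \/ condb a b n (search a b n m) = true.
Proof. induction m; simpl; auto. destruct (condb a b n (S m)) eqn:E; auto. Qed.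

Definition W (a b : nat -> R) (n : nat) : R :=
  let k := search a b n n in Umax a k (n - k).

Lemma condb_ext a b a' b' n k : (forall t, (t <= n)%nat -> a t = a' t /\ b t = b' t) -> (k <= n)%nat ->
  condb a b n k = condb a' b' n k.
Proof.
  intros H Hk. unfold condb.
  rewrite (Umax_ext a a') by (intros t Ht; apply H; lia).
  rewrite (Vmin_ext b b') by (intros t Ht; apply H; lia). auto.
Qed.
Lemma search_ext a b a' b' n m : (forall t, (t <= n)%nat -> a t = a' t /\ b t = b' t) -> (m <= n)%nat ->
  search a b n m = search a' b' n m.
Proof.
  intros H; induction m; intros Hm; simpl; auto.
  rewrite (condb_ext a b a' b') by auto. rewrite IHm by lia. auto.
Qed.
Lemma W_ext a b a' b' n : (forall t, (t <= n)%nat -> a t = a' t /\ b t = b' t) -> W a b n = W a' b' n.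
Proof.
  intros H. unfold W. rewrite (search_ext a b a' b') by auto.
  assert (Hs := search_le a' b' n n).
  apply Umax_ext. intros t Ht. apply H. lia.
Qed.

Lemma W_lim (a b : nat -> R) (c : R) :
  (forall eps, 0 < eps -> exists K, forall t, (K <= t)%nat -> a t < c + eps) ->
  (forall eps, 0 < eps -> exists K, forall t, (K <= t)%nat -> c - eps < b t) ->
  (forall eps, 0 < eps -> forall N, exists t, (N <= t)%nat /\ c - eps < a t) ->
  (forall eps, 0 < eps -> forall N, exists t, (N <= t)%nat /\ b t < c + eps) ->
  is_lim_seq (W a b) c.
Proof.
  intros H1 H2 H3 H4. apply is_lim_seq_spec. intros [eps Heps]. simpl.
  destruct (H1 (eps/2)) as [K1 HK1]; [lra|].
  destruct (H2 (eps/2)) as [K2 HK2]; [lra|].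
  destruct (archimed_cor1 (eps/2)) as [M0 [HM0 HM0p]]; [lra|].
  set (M := (M0 + K1 + K2)%nat).
  assert (HMpos : 0 < INR M0) by (apply lt_0_INR; lia).
  assert (HMM : INR M0 <= INR M) by (apply le_INR; unfold M; lia).
  assert (HinvM : / (INR M + 1) < eps / 2).
  { eapply Rlt_le_trans; [|apply Rlt_le, HM0].
    apply Rinv_lt_contravar; [nra| lra]. }
  set (d := / (2 * (INR M + 1))).
  assert (Hd : 0 < d) by (unfold d; apply Rinv_0_lt_compat; pose proof (pos_INR M); lra).
  assert (Hd2 : 2 * d = / (INR M + 1)).
  { unfold d. rewrite Rinv_mult. field. pose proof (pos_INR M); lra. }
  destruct (H3 d Hd M) as [t2 [Ht2 Hat2]].
  destruct (H4 d Hd M) as [t1 [Ht1 Hbt1]].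
  exists (Nat.max t1 t2). intros n Hn.
  assert (HcM : condb a b n M = true).
  { unfold condb. destruct Rle_dec as [_|Hn']; auto. exfalso; apply Hn'.
    assert (E1 := Vmin_le b M (n - M) (t1 - M) ltac:(lia)).
    assert (E2 := Umax_ge a M (n - M) (t2 - M) ltac:(lia)).
    replace (M + (t1 - M))%nat with t1 in E1 by lia.
    replace (M + (t2 - M))%nat with t2 in E2 by lia. lra. }
  unfold W. set (k := search a b n n).
  assert (Hk : (M <= k)%nat) by (apply search_ge; auto; lia).
  assert (Hck : condb a b n k = true).
  { destruct (search_cond a b n n) as [E|E]; fold k in E; auto. unfold M in Hk; lia. }
  unfold condb in Hck. destruct Rle_dec as [Hc|]; [|discriminate].
  assert (HkM : INR M <= INR k) by (apply le_INR; auto).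
  assert (Hik : / (INR k + 1) <= / (INR M + 1)).
  { apply Rinv_le_contravar; [pose proof (pos_INR M); lra| lra]. }
  assert (U1 : Umax a k (n - k) <= c + eps/2).
  { apply Umax_le. intros t Ht. left. apply HK1. unfold M in Hk. lia. }
  assert (V1 : c - eps/2 <= Vmin b k (n - k)).
  { apply Vmin_ge. intros t Ht. left. apply HK2. unfold M in Hk. lia. }
  apply Rabs_def1; lra.
Qed.
Definition Qp (A : Type) Tr (g : nat -> branches A Tr -> R) (s : list A) (k : nat) : Prop :=
  forall y z, cyl A Tr s y -> cyl A Tr s z -> Rabs (g k y - g k z) < / (INR k + 1).

Fixpoint searchQ (A : Type) Tr g (s : list A) (m : nat) : nat :=
  match m with O => O
  | S m' => if excluded_middle_informative (Qp A Tr g s (S m')) then S m' else searchQ A Tr g s m' end.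

Lemma searchQ_ge A Tr g s m j : (j <= m)%nat -> Qp A Tr g s j -> (j <= searchQ A Tr g s m)%nat.
Proof.
  induction m; intros Hj Hc; simpl. - lia.
  - destruct (Nat.eq_dec j (S m)) as [->|Hne].
    + destruct excluded_middle_informative; [lia| contradiction].
    + destruct excluded_middle_informative; [lia| apply IHm; auto; lia].
Qed.
Lemma searchQ_cond A Tr g s m : searchQ A Tr g s m = O \/ Qp A Tr g s (searchQ A Tr g s m).
Proof. induction m; simpl; auto. destruct excluded_middle_informative; auto. Qed.

Definition uF (A : Type) Tr (g : nat -> branches A Tr -> R) (s : list A) : R :=
  match excluded_middle_informative (exists y, cyl A Tr s y) with
  | left H => g (searchQ A Tr g s (length s)) (proj1_sig (constructive_indefinite_description _ H))
  | right _ => 0 end.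

Lemma lim_limsup (u : nat -> R) (l : R) : is_lim_seq u l -> LimSup_seq u = Finite l.
Proof. intros H. apply is_LimSup_seq_unique. apply is_lim_LimSup_seq. exact H. Qed.

Lemma forward A Tr (g : nat -> branches A Tr -> R) (f : branches A Tr -> R)
 (LP : forall n x eps, 0 < eps -> exists t, forall y,
     cyl A Tr (Defs.pre A (proj1_sig x) t) y -> Rabs (g n y - g n x) < eps)
 (Hl : forall x, is_lim_seq (fun n => g n x) (f x)) : limsup_function A Tr f.
Proof.
  exists (uF A Tr g). intros x. apply lim_limsup.
  apply is_lim_seq_spec. intros [eps Heps]. simpl.
  assert (Hx := proj2 (is_lim_seq_spec _ _) (Hl x) (mkposreal (eps/2) ltac:(lra))).
  destruct Hx as [N HN]. simpl in HN.
  destruct (archimed_cor1 (eps/2)) as [M0 [HM0 HM0p]]; [lra|].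
  set (M := (M0 + N)%nat).
  assert (HMpos : 0 < INR M0) by (apply lt_0_INR; lia).
  assert (HMM : INR M0 <= INR M) by (apply le_INR; unfold M; lia).
  assert (HinvM : / (INR M + 1) < eps / 2).
  { eapply Rlt_le_trans; [|apply Rlt_le, HM0].
    apply Rinv_lt_contravar; [nra| lra]. }
  set (d := / (2 * (INR M + 1))).
  assert (Hd : 0 < d) by (unfold d; apply Rinv_0_lt_compat; pose proof (pos_INR M); lra).
  assert (Hd2 : 2 * d = / (INR M + 1)).
  { unfold d. rewrite Rinv_mult. field. pose proof (pos_INR M); lra. }
  destruct (LP M x d Hd) as [t0 Ht0].
  exists (Nat.max t0 M). intros t Ht.
  set (s := Defs.pre A (proj1_sig x) (S t)).
  assert (Hsub : forall y, cyl A Tr s y -> cyl A Tr (Defs.pre A (proj1_sig x) t0) y).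
  { intros y Hy. apply cyl_pre_iff. intros i Hi. unfold s in Hy. apply (proj1 (cyl_pre_iff A Tr _ _ _) Hy). lia. }
  assert (HQM : Qp A Tr g s M).
  { intros y z Hy Hz. apply Hsub in Hy. apply Hsub in Hz.
    apply Ht0 in Hy. apply Ht0 in Hz.
    apply Rabs_def2 in Hy. apply Rabs_def2 in Hz. apply Rabs_def1; lra. }
  assert (Hxs : exists y, cyl A Tr s y) by (exists x; apply cyl_self).
  unfold uF. destruct excluded_middle_informative as [H|H]; [|contradiction].
  destruct (constructive_indefinite_description _ H) as [y Hy]. cbn [proj1_sig].
  fold s. set (k := searchQ A Tr g s (length s)).
  assert (Hk : (M <= k)%nat).
  { apply searchQ_ge; auto. unfold s. rewrite pre_length. lia. }
  assert (HQk : Qp A Tr g s k).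
  { destruct (searchQ_cond A Tr g s (length s)) as [E|E]; fold k in E; auto. unfold M in Hk; lia. }
  assert (HkM : INR M <= INR k) by (apply le_INR; auto).
  assert (Hik : / (INR k + 1) <= / (INR M + 1)).
  { apply Rinv_le_contravar; [pose proof (pos_INR M); lra| lra]. }
  assert (E1 := HQk y x Hy (cyl_self A Tr x (S t))).
  assert (E2 := HN k ltac:(unfold M in Hk; lia)).
  apply Rabs_def2 in E1. apply Rabs_def2 in E2. apply Rabs_def1; lra.
Qed.

Lemma max_list_ge (A : Type) (ss : list (list A)) s :
  In s ss -> (length s <= fold_right Nat.max 0%nat (map (@length A) ss))%nat.
Proof.
  induction ss; simpl; [tauto|]. intros [->|H]; [lia|]. specialize (IHss H). lia.
Qed.

Lemma cont_LP A Tr (h : branches A Tr -> R) : branch_continuous A Tr h ->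
  forall x eps, 0 < eps -> exists t, forall y,
     cyl A Tr (Defs.pre A (proj1_sig x) t) y -> Rabs (h y - h x) < eps.
Proof.
  intros Hc x eps Heps.
  set (V := fun r => Rabs (r - h x) < eps).
  assert (HV : open_set V).
  { intros r Hr. unfold V in Hr.
    exists (mkposreal (eps - Rabs (r - h x)) ltac:(lra)).
    intros z Hz. unfold disc in Hz; simpl in Hz. unfold V.
    replace (z - h x) with ((z - r) + (r - h x)) by ring.
    eapply Rle_lt_trans; [apply Rabs_triang| lra]. }
  destruct (Hc V HV x) as [ss [HT [Hcx Hall]]].
  { unfold V. rewrite Rminus_diag, Rabs_R0. exact Heps. }
  exists (fold_right Nat.max 0%nat (map (@length A) ss)). intros y Hy.
  apply (Hall y). apply Forall_forall. intros s Hs.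
  rewrite Forall_forall in Hcx. specialize (Hcx s Hs).
  assert (HL := max_list_ge A ss s Hs).
  unfold cyl, initial_segment in *. rewrite Hcx at 1.
  apply pre_eq_iff. intros i Hi.
  apply (proj1 (cyl_pre_iff A Tr _ _ _) Hy). lia.
Qed.

Lemma limsup_spec (a : nat -> R) (c : R) : LimSup_seq a = Finite c -> is_LimSup_seq a c.
Proof.
  intros H. destruct (ex_LimSup_seq a) as [l Hl].
  rewrite (is_LimSup_seq_unique _ _ Hl) in H. subst l. exact Hl.
Qed.

Theorem mainTheorem5 (A : Type) (HA : inhabited A) (Hc : countable A)
  (Tr : list A -> Prop) (Htree : is_tree A Tr) (Hpr : is_pruned A Tr)
  (f : branches A Tr -> R) :
  baire_class1 A Tr f <->
  (limsup_function A Tr f /\ limsup_function A Tr (fun x => - f x)).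
Proof.
  split.
  - intros [g [Hg Hl]]. split.
    + apply (forward A Tr g f); auto. intros n. apply cont_LP, Hg.
    + apply (forward A Tr (fun n x => - g n x) (fun x => - f x)).
      * intros n x eps He. destruct (cont_LP A Tr (g n) (Hg n) x eps He) as [t Ht].
        exists t. intros y Hy. specialize (Ht y Hy).
        replace (- g n y - - g n x) with (- (g n y - g n x)) by ring.
        rewrite Rabs_Ropp. exact Ht.
      * intros x. apply (is_lim_seq_opp (fun n => g n x) (f x)). apply Hl.
  - intros [[u Hu] [u' Hu']].
    set (a := fun (x : branches A Tr) t => u (Defs.pre A (proj1_sig x) (S t))).
    set (b := fun (x : branches A Tr) t => - u' (Defs.pre A (proj1_sig x) (S t))).
    exists (fun n x => W (a x) (b x) n). split.
    + intros n V HV x HVx.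
      exists (cons (Defs.pre A (proj1_sig x) (S n)) nil). split; [|split].
      * constructor; [apply (proj2_sig x)| constructor].
      * constructor; [apply cyl_self| constructor].
      * intros y Hy. inversion Hy as [|? ? Hy1 _]; subst.
        assert (E : W (a y) (b y) n = W (a x) (b x) n).
        { apply W_ext. intros t Ht. unfold a, b.
          assert (P : Defs.pre A (proj1_sig y) (S t) = Defs.pre A (proj1_sig x) (S t)).
          { apply pre_eq_iff. intros i Hi. symmetry.
            apply (proj1 (cyl_pre_iff A Tr _ _ _) Hy1). lia. }
          rewrite P. auto. }
        rewrite E. exact HVx.
    + intros x. specialize (Hu x). specialize (Hu' x).
      apply limsup_spec in Hu. apply limsup_spec in Hu'.
      simpl in Hu, Hu'.
      apply W_lim.
      * intros eps He. destruct (Hu (mkposreal eps He)) as [_ [K HK]].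
        exists K. intros t Ht. apply (HK t Ht).
      * intros eps He. destruct (Hu' (mkposreal eps He)) as [_ [K HK]].
        exists K. intros t Ht. specialize (HK t Ht). simpl in HK. unfold b. lra.
      * intros eps He N. destruct (Hu (mkposreal eps He)) as [HN _].
        destruct (HN N) as [t [Ht1 Ht2]]. exists t. split; auto.
      * intros eps He N. destruct (Hu' (mkposreal eps He)) as [HN _].
        destruct (HN N) as [t [Ht1 Ht2]]. exists t. split; auto. simpl in Ht2. unfold b. lra.
Qed.
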